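(* Let $(\pi_1,\pi_2)$ be any (not necessarily chainable) architecture of depth $2$, i.e. patterns $\pi_i=(a_i,b_i,c_i,d_i)$ with $a_1c_1d_1=a_2b_2d_2$. Then the rank-one contribution supports $\mathbf{U}_i=\mathbf{S}_{\pi_1}[:,i]\mathbf{S}_{\pi_2}[i,:]$, $1\le i\le a_1c_1d_1$, are pairwise either disjoint (in support) or identical. Consequently, for every complex matrix $\mathbf{A}$ of size $a_1b_1d_1\times a_2c_2d_2$, the TwoFactor procedure with input $(\mathbf{A},\mathbf{S}_{\pi_1},\mathbf{S}_{\pi_2})$ returns an optimal solution of $$\inf_{\mathbf{X}\in\Sigma^{\pi_1},\mathbf{Y}\in\Sigma^{\pi_2}}\|\mathbf{A}-\mathbf{X}\mathbf{Y}\|_F^2.$$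
   Context: A pattern is a tuple $\pi=(a,b,c,d)$ of positive integers; $\mathbf{S}_\pi:=\mathbf{I}_a\otimes\mathbf{1}_{b\times c}\otimes\mathbf{I}_d\in\{0,1\}^{abd\times acd}$. A $\pi$-factor is a complex $abd\times acd$ matrix with support contained in that of $\mathbf{S}_\pi$; $\Sigma^\pi$ is the set of $\pi$-factors. For binary $\mathbf{L}\in\{0,1\}^{m\times r},\mathbf{R}\in\{0,1\}^{r\times n}$, let $\mathbf{U}_i:=\mathbf{L}[:,i]\mathbf{R}[i,:]$, let $\mathcal{P}(\mathbf{L},\mathbf{R})$ be the partition of $\{1,\dots,r\}$ into classes of $i\sim j\iff\mathbf{U}_i=\mathbf{U}_j$, and for a class $P$ let $R_P\times C_P$ be the support of $\mathbf{U}_i$, $i\in P$. TwoFactor$(\mathbf{A},\mathbf{L},\mathbf{R})$: set $\mathbf{X}=\mathbf{0}_{m\times r},\mathbf{Y}=\mathbf{0}_{r\times n}$; for each $P\in\mathcal{P}(\mathbf{L},\mathbf{R})$ set $(\mathbf{X}[R_P,P],\mathbf{Y}[P,C_P])$ to a pair $(\mathbf{H},\mathbf{K})\in\mathbb{C}^{|R_P|\times|P|}\times\mathbb{C}^{|P|\times|C_P|}$ minimizing $\|\mathbf{A}[R_P,C_P]-\mathbf{H}\mathbf{K}\|_F$; return $(\mathbf{X},\mathbf{Y})$. *)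

(* Defs.v *)
From HB Require Import structures.
From mathcomp Require Import all_boot all_order all_algebra.
From mathcomp Require Import complex mxtens.
From mathcomp Require Import reals.
Set Implicit Arguments. Unset Strict Implicit. Unset Printing Implicit Defensive.
Import Order.TTheory GRing.Theory Num.Theory.
Local Open Scope ring_scope.

(* A pattern pi = (a,b,c,d) and its support matrix
   S_pi = I_a (x) 1_{b x c} (x) I_d, an (a*b*d) x (a*c*d) 0/1 matrix
   over a field F (Kronecker product = tensmx, row-major index i*n+j). *)
Definition Spat (F : fieldType) (a b c d : nat) : 'M[F]_(a * b * d, a * c * d) :=
  tensmx (tensmx (1%:M : 'M[F]_a) (const_mx 1 : 'M[F]_(b, c))) (1%:M : 'M[F]_d).

Definition is_factor (F : fieldType) (m n : nat) (S X : 'M[F]_(m, n)) : Prop :=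
  forall i j, S i j = 0 -> X i j = 0.

Definition frob2 (R : rcfType) (m n : nat) (M : 'M[R[i]]_(m, n)) : R[i] :=
  \sum_(i < m) \sum_(j < n) `|M i j| ^+ 2.

Definition Ucontrib (F : fieldType) (m r n : nat)
  (L : 'M[F]_(m, r)) (Rm : 'M[F]_(r, n)) (k : 'I_r) : 'M[F]_(m, n) :=
  col k L *m row k Rm.

Definition Urows (F : fieldType) (m r n : nat) (L : 'M[F]_(m, r)) (Rm : 'M[F]_(r, n))
  (k : 'I_r) (i : 'I_m) : bool := [exists j, Ucontrib L Rm k i j != 0].
Definition Ucols (F : fieldType) (m r n : nat) (L : 'M[F]_(m, r)) (Rm : 'M[F]_(r, n))
  (k : 'I_r) (j : 'I_n) : bool := [exists i, Ucontrib L Rm k i j != 0].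
Definition Uclass (F : fieldType) (m r n : nat) (L : 'M[F]_(m, r)) (Rm : 'M[F]_(r, n))
  (k k' : 'I_r) : bool := Ucontrib L Rm k' == Ucontrib L Rm k.

(* Block error ||A[R_P,C_P] - H K||_F^2 where the block H (rows R_P, columns P)
   is read off X and K (rows P, columns C_P) off Y; k represents the class P. *)
Definition block_err (R : rcfType) (m r n : nat) (L : 'M[R[i]]_(m, r))
  (Rm : 'M[R[i]]_(r, n)) (A : 'M[R[i]]_(m, n)) (k : 'I_r)
  (X : 'M[R[i]]_(m, r)) (Y : 'M[R[i]]_(r, n)) : R[i] :=
  \sum_(i < m | Urows L Rm k i) \sum_(j < n | Ucols L Rm k j)
     `|A i j - \sum_(k' < r | Uclass L Rm k k') X i k' * Y k' j| ^+ 2.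

(* (X, Y) is a possible output of TwoFactor(A, L, Rm): X, Y vanish outside the
   blocks R_P x P and P x C_P, and on each class P the blocks form a pair
   (H, K) minimizing ||A[R_P,C_P] - H K||_F over all (H, K) of that shape
   (an arbitrary such pair is represented by matrices X', Y'). *)
Definition TwoFactor_output (R : rcfType) (m r n : nat) (A : 'M[R[i]]_(m, n))
  (L : 'M[R[i]]_(m, r)) (Rm : 'M[R[i]]_(r, n))
  (X : 'M[R[i]]_(m, r)) (Y : 'M[R[i]]_(r, n)) : Prop :=
  (forall i k, ~~ Urows L Rm k i -> X i k = 0) /\
  (forall k j, ~~ Ucols L Rm k j -> Y k j = 0) /\
  (forall k (X' : 'M[R[i]]_(m, r)) (Y' : 'M[R[i]]_(r, n)),
      block_err L Rm A k X Y <= block_err L Rm A k X' Y').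

(* Main.v *)
Require Import Defs.
From HB Require Import structures.
From mathcomp Require Import all_boot all_order all_algebra.
From mathcomp Require Import complex mxtens.
From mathcomp Require Import reals.
Set Implicit Arguments. Unset Strict Implicit. Unset Printing Implicit Defensive.
Import Order.TTheory GRing.Theory Num.Theory.
Local Open Scope ring_scope.

Section Gen.
Variables (F : fieldType) (m r n : nat) (L : 'M[F]_(m, r)) (Rm : 'M[F]_(r, n)).

Lemma UE k i j : Ucontrib L Rm k i j = L i k * Rm k j.
Proof. by rewrite /Ucontrib !mxE big_ord1 !mxE. Qed.

Lemma UrowsE (hR : forall k, exists j, Rm k j != 0) k i :
  Urows L Rm k i = (L i k != 0).
Proof.
apply/existsP/idP => [[j]|Hi]; first by rewrite UE; apply: contra => /eqP ->; rewrite mul0r.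
by have [j Hj] := hR k; exists j; rewrite UE mulf_neq0.
Qed.

Lemma UcolsE (hL : forall k, exists i, L i k != 0) k j :
  Ucols L Rm k j = (Rm k j != 0).
Proof.
apply/existsP/idP => [[i0]|Hj]; first by rewrite UE; apply: contra => /eqP ->; rewrite mulr0.
by have [i Hi] := hL k; exists i; rewrite UE mulf_neq0.
Qed.

Lemma rowscols k i j : Urows L Rm k i && Ucols L Rm k j = (Ucontrib L Rm k i j != 0).
Proof.
apply/andP/idP => [ [] | Hij].
  move=> /existsP [j' Hj'] /existsP [i' Hi'].
  move: Hj' Hi'; rewrite !UE => Hj' Hi'; apply: mulf_neq0.
    by apply: contra Hj' => /eqP ->; rewrite mul0r.
  by apply: contra Hi' => /eqP ->; rewrite mulr0.
by split; apply/existsP; [exists j | exists i].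
Qed.

Lemma dichot (T1 T2 : eqType) (fl : 'I_m -> T1) (gl : 'I_r -> T1)
  (fr : 'I_r -> T2) (gr : 'I_n -> T2)
  (hL : forall i k, L i k = (fl i == gl k)%:R)
  (hR : forall k j, Rm k j = (fr k == gr j)%:R) k k' :
  (forall i j, ~~ ((Ucontrib L Rm k i j != 0) && (Ucontrib L Rm k' i j != 0)))
      \/ Ucontrib L Rm k = Ucontrib L Rm k'.
Proof.
have Hnz : forall k0 i j, (Ucontrib L Rm k0 i j != 0) = (fl i == gl k0) && (fr k0 == gr j).
  move=> k0 i j; rewrite UE hL hR.
  by case: (fl i == gl k0); case: (fr k0 == gr j); rewrite /= ?mul0r ?mulr0 ?mulr1 ?eqxx ?oner_eq0.
case: (pickP (fun p : 'I_m * 'I_n => (Ucontrib L Rm k p.1 p.2 != 0) && (Ucontrib L Rm k' p.1 p.2 != 0))).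
  move=> [i j] /=; rewrite !Hnz => /andP[/andP[/eqP e1 /eqP e2] /andP[/eqP e3 /eqP e4]].
  right; apply/matrixP => i' j'; rewrite !UE !hL !hR.
  by rewrite -e1 e3 e2 -e4.
move=> Hn; left => i j; have := Hn (i, j); by move=> /= ->.
Qed.
End Gen.
Section Frob.
Variables (R : rcfType) (m r n : nat) (L : 'M[R[i]]_(m, r)) (Rm : 'M[R[i]]_(r, n)).
Local Notation U := (Ucontrib L Rm).
Hypothesis hD : forall k k' : 'I_r,
  (forall i j, ~~ ((U k i j != 0) && (U k' i j != 0))) \/ U k = U k'.

Definition supp (X : 'M[R[i]]_(m, r)) (Y : 'M[R[i]]_(r, n)) :=
  (forall i k, X i k != 0 -> Urows L Rm k i) /\ (forall k j, Y k j != 0 -> Ucols L Rm k j).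

Lemma prodE X Y : supp X Y -> forall i j,
  (X *m Y) i j = \sum_(k | U k i j != 0) X i k * Y k j.
Proof.
move=> [hX hY] i j; rewrite mxE [RHS]big_mkcond; apply: eq_bigr => k _.
case: ifP => // /negbT; rewrite -rowscols negb_and => /orP[H|H].
  have -> : X i k = 0 by apply/eqP; apply: contraNT H; exact: hX.
  by rewrite mul0r.
have -> : Y k j = 0 by apply/eqP; apply: contraNT H; exact: hY.
by rewrite mulr0.
Qed.

Lemma class_eq k k' i j : U k i j != 0 -> (U k' i j != 0) = Uclass L Rm k k'.
Proof.
move=> Hk; rewrite /Uclass; case: (U k' =P U k) => [-> //|Hne].
case: (hD k k') => [Hd|Heq]; last by rewrite Heq in Hne.
by have := Hd i j; rewrite Hk /= => /negbTE ->.
Qed.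

Definition Rep (k : 'I_r) := [forall k', Uclass L Rm k k' ==> (k <= k')%N].
Definition covered i j := [exists k, U k i j != 0].

Lemma cover (g : R[i]) i j :
  \sum_(k | Rep k) (if U k i j != 0 then g else 0) = if covered i j then g else 0.
Proof.
case: ifP => [/existsP[k1 Hk1]|/negbT Hn]; last first.
  apply: big1 => k _; case: ifP => // Hk; case/negP: Hn; by apply/existsP; exists k.
case: (@arg_minnP _ k1 (fun k => U k i j != 0) (fun k : 'I_r => val k) Hk1) => k0 Hk0 Hmin.
have R0 : Rep k0.
  apply/forallP => k'; apply/implyP => Hc; apply: Hmin; by rewrite (class_eq _ Hk0).
rewrite (bigD1 k0) //= Hk0 big1 ?addr0 // => k /andP[Rk Hne]; case: ifP => // Hk.
case/eqP: Hne; apply: val_inj; apply/eqP; rewrite eqn_leq.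
have c1 : Uclass L Rm k k0 by rewrite -(class_eq _ Hk).
have c2 : Uclass L Rm k0 k by rewrite -(class_eq _ Hk0).
by rewrite (implyP (forallP Rk k0) c1) (implyP (forallP R0 k) c2).
Qed.

Lemma subE (M N : 'M[R[i]]_(m, n)) i j : (M - N) i j = M i j - N i j.
Proof. by rewrite !mxE. Qed.

Lemma block_errE A k X Y : supp X Y ->
  block_err L Rm A k X Y =
  \sum_i \sum_j (if U k i j != 0 then `|(A - X *m Y) i j| ^+ 2 else 0).
Proof.
move=> hs; rewrite /block_err big_mkcond; apply: eq_bigr => i _.
case: ifP => Hr; last first.
  by apply/esym/big1 => j _; rewrite -rowscols Hr.
rewrite big_mkcond; apply: eq_bigr => j _.
rewrite -rowscols Hr /=; case: ifP => // Hc.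
have Hk : U k i j != 0 by rewrite -rowscols Hr Hc.
rewrite subE (prodE hs); congr (`|_ - _| ^+ 2); apply: eq_bigl => k'.
by rewrite (class_eq _ Hk).
Qed.

Lemma frobE A X Y : supp X Y ->
  frob2 (A - X *m Y) = \sum_(k | Rep k) block_err L Rm A k X Y +
     \sum_i \sum_j (if covered i j then 0 else `|A i j| ^+ 2).
Proof.
move=> hs.
rewrite (eq_bigr (fun k => \sum_i \sum_j (if U k i j != 0 then `|(A - X *m Y) i j| ^+ 2 else 0)));
  last by move=> k _; rewrite block_errE.
rewrite exchange_big /= -big_split /frob2; apply: eq_bigr => i _.
rewrite exchange_big /= -big_split; apply: eq_bigr => j _ /=.
rewrite cover; case: ifP => Hc; first by rewrite addr0.
rewrite add0r subE (prodE hs) big_pred0 ?subr0 // => k.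
by apply/negbTE; apply/negP => Hk; move/negbT: Hc; case/negP; apply/existsP; exists k.
Qed.

Lemma frob_le A X Y X' Y' : supp X Y -> supp X' Y' ->
  (forall k, block_err L Rm A k X Y <= block_err L Rm A k X' Y') ->
  frob2 (A - X *m Y) <= frob2 (A - X' *m Y').
Proof.
move=> h1 h2 hb; rewrite (frobE _ h1) (frobE _ h2) lerD2r.
by apply: ler_sum => k _.
Qed.
End Frob.
Definition key (a b d : nat) (i : 'I_(a * b * d)) : 'I_a * 'I_d :=
  ((mxtens_unindex (mxtens_unindex i).1).1, (mxtens_unindex i).2).

Lemma SpatE (F : fieldType) a b c d (i : 'I_(a * b * d)) (j : 'I_(a * c * d)) :
  Spat F a b c d i j = (key i == key j)%:R.
Proof.
rewrite /Spat !mxE /key xpair_eqE.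
by case: (_ == _); case: (_ == _); rewrite /= ?mulr1 ?mul1r ?mulr0 ?mul0r.
Qed.

Lemma key_surj a b d (hb : (0 < b)%N) (p : 'I_a * 'I_d) : exists i : 'I_(a * b * d), key i = p.
Proof.
exists (mxtens_index (mxtens_index (p.1, Ordinal hb), p.2)).
by rewrite /key !mxtens_indexK /=; case: p.
Qed.

Lemma castK2 p q (e1 : q = p) (e2 : p = q) (i : 'I_p) : cast_ord e1 (cast_ord e2 i) = i.
Proof. by apply: val_inj. Qed.
Lemma castK1 p (e : p = p) (i : 'I_p) : cast_ord e i = i.
Proof. by apply: val_inj. Qed.
Lemma castE p q (e1 e2 : p = q) (i : 'I_p) : cast_ord e1 i = cast_ord e2 i.
Proof. by apply: val_inj. Qed.

Theorem lemma5p1 (R : realType) (a1 b1 c1 d1 a2 b2 c2 d2 : nat)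
  (ha1 : (0 < a1)%N) (hb1 : (0 < b1)%N) (hc1 : (0 < c1)%N) (hd1 : (0 < d1)%N)
  (ha2 : (0 < a2)%N) (hb2 : (0 < b2)%N) (hc2 : (0 < c2)%N) (hd2 : (0 < d2)%N)
  (H : (a1 * c1 * d1 = a2 * b2 * d2)%N) :
  let S1 := Spat (R[i]) a1 b1 c1 d1 in
  let S2 := castmx (esym H, erefl) (Spat (R[i]) a2 b2 c2 d2) in
  (forall k k' : 'I_(a1 * c1 * d1),
      (forall i j, ~~ ((Ucontrib S1 S2 k i j != 0) && (Ucontrib S1 S2 k' i j != 0)))
      \/ Ucontrib S1 S2 k = Ucontrib S1 S2 k') /\
  (forall (A : 'M[R[i]]_(a1 * b1 * d1, a2 * c2 * d2)) X Y,
      TwoFactor_output A S1 S2 X Y ->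
      is_factor S1 X /\ is_factor (Spat (R[i]) a2 b2 c2 d2) (castmx (H, erefl) Y) /\
      forall X' Y', is_factor S1 X' ->
        is_factor (Spat (R[i]) a2 b2 c2 d2) (castmx (H, erefl) Y') ->
        frob2 (A - X *m Y) <= frob2 (A - X' *m Y')).
Proof.
move=> S1 S2.
have hS1 i k : S1 i k = (key i == key k)%:R by rewrite /S1 SpatE.
have hS2 k j : S2 k j = (key (cast_ord H k) == key j)%:R.
  by rewrite /S2 castmxE SpatE castK1 (castE _ H).
have hD := dichot hS1 hS2.
have hR1 : forall k, exists j, S2 k j != 0.
  move=> k; have [j Hj] := key_surj hc2 (key (cast_ord H k)).
  by exists j; rewrite hS2 Hj eqxx oner_eq0.
have hL1 : forall k, exists i, S1 i k != 0.
  move=> k; have [i0 Hi] := key_surj hb1 (key k).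
  by exists i0; rewrite hS1 Hi eqxx oner_eq0.
split; first exact: hD.
move=> A X Y [hX [hY hopt]].
have sXY : supp S1 S2 X Y.
  split=> [i0 k Hne|k j Hne].
    by case: (boolP (Urows S1 S2 k i0)) => // /hX Hx; rewrite Hx eqxx in Hne.
  by case: (boolP (Ucols S1 S2 k j)) => // /hY Hx; rewrite Hx eqxx in Hne.
split.
  by move=> i0 k H0; apply: hX; rewrite (UrowsE _ hR1) H0 eqxx.
split.
  move=> k j H0; rewrite castmxE; apply: hY; rewrite (UcolsE _ hL1).
  by rewrite /S2 castmxE !castK2 H0 eqxx.
move=> X' Y' fX' fY'.
apply: (frob_le hD sXY _ (fun k => hopt k X' Y')).
split=> [i0 k Hne|k j Hne].
  rewrite (UrowsE _ hR1); apply/negP => /eqP /fX' Hx.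
  by rewrite Hx eqxx in Hne.
rewrite (UcolsE _ hL1); apply/negP => /eqP H0.
have := fY' (cast_ord H k) j.
rewrite castmxE castK2 castK1 => Hy.
move: H0; rewrite /S2 castmxE castK1 (castE _ H) => /Hy Hx.
by rewrite Hx eqxx in Hne.
Qed.
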